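(* Let $I=[x_1,x_N]$ with partition $x_1<\dots<x_N$ and affine maps $u_i(x)=a_ix+b_i$ with $u_i(x_1)=x_i$, $u_i(x_N)=x_{i+1}$ ($i\in\mathbb{N}_{N-1}$). Let $\{f_k\}_{k\ge1}$ be a sequence of positive functions in $C(I)$ converging in sup-norm to $f\in C(I)$, and let $\{q_n\}_{n\ge1}$ be a sequence in $(0,1]$ with $\lim q_n=1$. For $k,n\in\mathbb{N}$ let $f^{(q_n,\alpha)}_{k,n}$ be the quantum MKZ-fractal function of $f_k$ with parameter $q_n$, i.e. the unique $g\in C(I)$ with $g(u_i(x))=f_k(u_i(x))+\alpha_i(x)(g(x)-M_{n,q_n}f_k(x))$ for all $x\in I$, $i\in\mathbb{N}_{N-1}$. Set $\phi(f_k,i)=\min_{x\in I}f_k(u_i(x))$, $\Phi(f_k,i)=\max_{x\in I}f_k(u_i(x))$, $\phi_{n,k}(f_k)=\min_{x\in I}M_{n,q_n}f_k(x)$, $\Phi_{n,k}(f_k)=\max_{x\in I}M_{n,q_n}f_k(x)$, and let $C^\dagger_{n,k}$ be a positive real number strictly greater than $\max\{\phi_{n,k}(f_k),\|f_k\|_\infty\}$. Suppose the continuous scaling functions satisfy (1) $\|\alpha_i\|_\infty<1$ for all $i$ and (2) for all $k,n\in\mathbb{N}$, $i\in\mathbb{N}_{N-1}$, $x\in I$: \[ \max\left\{\frac{-\phi(f_k,i)}{C^\dagger_{n,k}-\phi_{n,k}(f_k)},-\frac{C^\dagger_{n,k}-\Phi(f_k,i)}{\Phi_{n,k}(f_k)}\right\}\le\alpha_i(x)\le\min\left\{\frac{\phi(f_k,i)}{\Phi_{n,k}(f_k)},\frac{C^\dagger_{n,k}-\Phi(f_k,i)}{C^\dagger_{n,k}-\phi_{n,k}(f_k)}\right\}.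 \] Then every $f^{(q_n,\alpha)}_{k,n}$ is positive on $I$, and the double sequence $\{\{f^{(q_n,\alpha)}_{k,n}\}_n\}_k$ converges to $f$ in sup-norm, i.e. for every $\varepsilon>0$ there is $k_0$ with $\|f^{(q_n,\alpha)}_{k,n}-f\|_\infty<\varepsilon$ for all $k,n\ge k_0$.
   Context: A function is called positive if it is $\ge0$ on $I$. For $q\in(0,1]$: $[k]_q=\frac{1-q^k}{1-q}$ ($q\ne1$), $[k]_1=k$, $q$-factorials, $\binom{n}{k}_q=\frac{[n]_q!}{[k]_q![n-k]_q!}$. Quantum MKZ operator: $M_{n,q}h(x)=P_{n,q}(x)\sum_{k\ge0}\binom{n+k}{k}_q\left(\frac{x-x_1}{x_N-x_1}\right)^k h\!\left(x_1+(x_N-x_1)\frac{[k]_q}{[k+n]_q}\right)$ for $x_1\le x<x_N$, $M_{n,q}h(x_N)=h(x_N)$, $P_{n,q}(x)=\prod_{j=0}^n(x_N-x_1-q^j(x-x_1))/(x_N-x_1)^{n+1}$. $\|\alpha\|_\infty=\max_i\|\alpha_i\|_\infty$. *)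

(* Defs.v *)
From HB Require Import structures.
From mathcomp Require Import all_boot all_order all_algebra.
From mathcomp Require Import all_classical all_reals all_analysis.
Set Implicit Arguments. Unset Strict Implicit. Unset Printing Implicit Defensive.
Import Order.TTheory GRing.Theory Num.Theory.
Import numFieldNormedType.Exports.
Local Open Scope classical_set_scope.
Local Open Scope ring_scope.

Section Defs.
Variable R : realType.

Definition qint (q : R) (k : nat) : R :=
  if q == 1 then k%:R else (1 - q ^+ k) / (1 - q).

Definition qfact (q : R) (n : nat) : R := \prod_(1 <= j < n.+1) qint q j.

Definition qbinom (q : R) (n k : nat) : R :=
  qfact q n / (qfact q k * qfact q (n - k)).

Definition Iset (x1 xN : R) : set R := [set t | x1 <= t <= xN].

Definition Pq (x1 xN : R) (n : nat) (q : R) (x : R) : R :=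
  (\prod_(0 <= j < n.+1) (xN - x1 - q ^+ j * (x - x1))) / (xN - x1) ^+ n.+1.

Definition MKZ (x1 xN : R) (n : nat) (q : R) (h : R -> R) (x : R) : R :=
  if x == xN then h xN
  else Pq x1 xN n q x *
       limn (series (fun k : nat => qbinom q (n + k) k * ((x - x1) / (xN - x1)) ^+ k *
                          h (x1 + (xN - x1) * (qint q k / qint q (k + n))))).

Definition supnorm (x1 xN : R) (h : R -> R) : R :=
  sup [set `|h t| | t in Iset x1 xN].

(* minimum / maximum of a function over I (continuous functions: attained) *)
Definition minI (x1 xN : R) (h : R -> R) : R := inf [set h t | t in Iset x1 xN].
Definition maxI (x1 xN : R) (h : R -> R) : R := sup [set h t | t in Iset x1 xN].

End Defs.

(* Main.v *)
Require Import Defs.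
From HB Require Import structures.
From mathcomp Require Import all_boot all_order all_algebra.
From mathcomp Require Import all_classical all_reals all_analysis.
From mathcomp Require Import ring lra.
Import Order.TTheory GRing.Theory Num.Theory.
Import numFieldNormedType.Exports.
Local Open Scope classical_set_scope.
Local Open Scope ring_scope.
Section QArith.
Variable R : realType.
Variable q : R.
Hypothesis q0 : 0 < q.
Hypothesis q1 : q <= 1.

Lemma qintE k : qint q k = \sum_(i < k) q ^+ i.
Proof.
rewrite /qint; case: eqP => [->|/eqP qn1].
  by under eq_bigr do rewrite expr1n; rewrite sumr_const card_ord.
have h : 1 - q != 0 by rewrite subr_eq0 eq_sym.
apply: (mulfI h); rewrite mulrC divfK //.
have := subrX1 q k; rewrite -opprB -[q - 1]opprB mulNr => /eqP.
by rewrite eqr_opp => /eqP ->; rewrite mulrC.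
Qed.

Lemma qint0 : qint q 0 = 0.
Proof. by rewrite qintE big_ord0. Qed.

Lemma qintD a c : qint q (a + c) = qint q a + q ^+ a * qint q c.
Proof.
rewrite !qintE big_split_ord /=; congr (_ + _); rewrite mulr_sumr.
by apply: eq_bigr => i _; rewrite exprD.
Qed.

Lemma qintS k : qint q k.+1 = qint q k + q ^+ k.
Proof. by rewrite -addn1 qintD; congr (_ + _); rewrite qintE big_ord1 expr0 mulr1. Qed.

Lemma qint1 : qint q 1 = 1.
Proof. by rewrite qintS qint0 add0r expr0. Qed.

Lemma qint_ge0 k : 0 <= qint q k.
Proof. by rewrite qintE sumr_ge0 // => i _; rewrite exprn_ge0 // ltW. Qed.

Lemma qint_gt0 k : (0 < k)%N -> 0 < qint q k.
Proof.
case: k => // k _; rewrite qintS.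
by apply: ltr_wpDl; [exact: qint_ge0 | exact: exprn_gt0].
Qed.

Lemma qint_le a c : (a <= c)%N -> qint q a <= qint q c.
Proof.
move=> ac; rewrite -(subnKC ac) qintD lerDl.
by rewrite mulr_ge0 ?qint_ge0 // exprn_ge0 // ltW.
Qed.

Lemma qfactS n : qfact q n.+1 = qfact q n * qint q n.+1.
Proof. by rewrite /qfact big_nat_recr. Qed.

Lemma qfact0 : qfact q 0 = 1.
Proof. by rewrite /qfact big_geq. Qed.


Lemma qfact_gt0 n : 0 < qfact q n.
Proof.
elim: n => [|n IH]; first by rewrite qfact0.
by rewrite qfactS mulr_gt0 // qint_gt0.
Qed.

Definition B n k := qbinom q (n + k) k.

Lemma BE n k : B n k = qfact q (n + k) / (qfact q k * qfact q n).
Proof. by rewrite /B /qbinom addnK. Qed.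

Lemma B_gt0 n k : 0 < B n k.
Proof. by rewrite BE divr_gt0 ?mulr_gt0 ?qfact_gt0. Qed.

Lemma Bn0 n : B n 0 = 1.
Proof.
rewrite BE addn0 qfact0 mul1r divff //; exact: lt0r_neq0 (qfact_gt0 _).
Qed.

Lemma B0k k : B 0 k = 1.
Proof.
rewrite BE add0n qfact0 mulr1 divff //; exact: lt0r_neq0 (qfact_gt0 _).
Qed.

Lemma Bpascal n k : B n.+1 k.+1 = B n.+1 k + q ^+ k.+1 * B n k.+1.
Proof.
rewrite !BE !addSn !addnS !qfactS.
have e : qint q (n + k).+2 = qint q k.+1 + q ^+ k.+1 * qint q n.+1.
  by rewrite -qintD addSn addnS addnC.
rewrite e.
have h1 := lt0r_neq0 (qfact_gt0 (n + k)).
have h2 := lt0r_neq0 (qfact_gt0 k).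
have h3 := lt0r_neq0 (qfact_gt0 n).
have h4 := lt0r_neq0 (qint_gt0 _ (ltn0Sn k)).
have h5 := lt0r_neq0 (qint_gt0 _ (ltn0Sn n)).
field.
by rewrite ?h1 ?h2 ?h3 ?h4 ?h5.
Qed.

Lemma Bxi n k : B n k.+1 * (qint q k.+1 / qint q (k.+1 + n)) = B n k.
Proof.
rewrite !BE addnS addSn addnC !qfactS.
have h1 := lt0r_neq0 (qfact_gt0 (n + k)).
have h2 := lt0r_neq0 (qfact_gt0 k).
have h3 := lt0r_neq0 (qfact_gt0 n).
have h4 := lt0r_neq0 (qint_gt0 _ (ltn0Sn k)).
have h5 := lt0r_neq0 (qint_gt0 _ (ltn0Sn (k + n))).
field.
by rewrite ?h1 ?h2 ?h3 ?h4 ?h5.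
Qed.

Lemma xi_step n k : (0 < n)%N ->
  qint q k.+1 / qint q (k.+1 + n) <= qint q k / qint q (k + n) + (qint q n)^-1.
Proof.
move=> n0.
set u := qint q k; set m := qint q n.
have eD1 : qint q (k + n) = m + q ^+ n * u by rewrite addnC qintD.
have eD1' : qint q (k + n) = u + q ^+ k * m by rewrite qintD.
have eS : qint q k.+1 = u + q ^+ k by rewrite qintS.
have eS2 : qint q (k.+1 + n) = qint q (k + n) + q ^+ (k + n) by rewrite addSn qintS.
set D1 := qint q (k + n) in eD1 eD1' eS2 *.
have m0 : 0 < m by exact: qint_gt0.
have u0 : 0 <= u by exact: qint_ge0.
have pk0 : 0 < q ^+ k by exact: exprn_gt0.
have pk1 : q ^+ k <= 1 by exact: exprn_ile1 (ltW q0) q1.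
have pkn0 : 0 < q ^+ (k + n) by exact: exprn_gt0.
have D1m : m <= D1 by rewrite /D1 qint_le // leq_addl.
have D10 : 0 < D1 by exact: lt_le_trans D1m.
rewrite eS eS2 exprD.
set p := q ^+ k in pk0 pk1 eD1' *; set r := q ^+ n in eD1 *.
have r0 : 0 < r by exact: exprn_gt0.
set E := D1 + p * r.
have E0 : 0 < E by rewrite ltr_wpDr // ltW // mulr_gt0.
have Em : m <= E by rewrite (le_trans D1m) // lerDl ltW // mulr_gt0.
have -> : (u + p) / E = u / D1 + p * m / (D1 * E).
  rewrite /E eD1.
  have hh : m + r * u + p * r != 0 by rewrite -eD1 lt0r_neq0.
  have hD : m + r * u != 0 by rewrite -eD1 lt0r_neq0.
  by field; rewrite hh hD.
rewrite lerD2l ler_pdivrMr ?mulr_gt0 // -(ler_pM2r m0) [X in _ <= X]mulrAC mulVf ?lt0r_neq0 // mul1r.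
have h1 : m * m <= D1 * E by apply: ler_pM => //; apply: ltW.
apply: le_trans h1; rewrite -mulrA ler_piMl // mulr_ge0 // ltW //.
Qed.


Lemma mono_series (u : R ^nat) M : (forall k, 0 <= u k) ->
  (forall K, series u K <= M) ->
  cvgn (series u) /\ limn (series u) <= M.
Proof.
move=> u0 uM.
have nd : nondecreasing_seq (series u).
  by move=> m p mp; apply: (@nondecreasing_series _ u predT 0) => // k.
have ub : has_ubound (range (series u)) by exists M => _ [K _ <-].
have cv := nondecreasing_cvgn nd ub.
have cu : cvgn (series u) by exact: cvgP cv.
split => //; apply: limr_le => //; exact: nearW.
Qed.

Lemma series_le_lim (u : R ^nat) K : (forall k, 0 <= u k) ->
  cvgn (series u) -> series u K <= limn (series u).
Proof.
move=> u0 cu; apply: nondecreasing_cvgn_le => // m p mp.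
by apply: (@nondecreasing_series _ u predT 0) => // k.
Qed.

Lemma Sconv n y : 0 <= y < 1 ->
  series (fun k => B n k * y ^+ k) @ \oo --> (\prod_(j < n.+1) (1 - q ^+ j * y))^-1.
Proof.
elim: n y => [|n IH] y /andP[y0 y1].
  have -> : (fun k => B 0 k * y ^+ k) = geometric 1 y.
    by apply/funext => k; rewrite B0k /geometric.
  rewrite big_ord1 expr0 mul1r.
  have := @cvg_geometric_series R 1 y; rewrite mul1r; apply.
  by rewrite ger0_norm.
have qy : 0 <= q * y < 1.
  by apply/andP; split; [exact: mulr_ge0 (ltW q0) y0 | exact: le_lt_trans (ler_piMl y0 q1) y1].
have cb := IH _ qy.
set T := (\prod_(j < n.+1) (1 - q ^+ j * (q * y)))^-1 in cb.
set a := series (fun k => B n.+1 k * y ^+ k).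
set b := series (fun k => B n k * (q * y) ^+ k).
have rec K : a K.+1 = y * a K + b K.+1.
  rewrite /a /b /series /= !big_nat_recl // !Bn0 !expr0 !mulr1.
  rewrite addrCA; congr (_ + _).
  under eq_bigr do rewrite Bpascal mulrDl.
  rewrite big_split /= mulr_sumr; congr (_ + _).
    apply: eq_bigr => k _; rewrite exprS; ring.
  by apply: eq_bigr => k _; rewrite exprMn; ring.
have a0 k : 0 <= B n.+1 k * y ^+ k by rewrite mulr_ge0 ?exprn_ge0 // ltW // B_gt0.
have b0 k : 0 <= B n k * (q * y) ^+ k.
  by case/andP: qy => qy0 _; rewrite mulr_ge0 ?exprn_ge0 // ltW // B_gt0.
have bT K : b K <= T.
  have -> : T = limn b by rewrite (cvg_lim _ cb).
  rewrite /b; apply: series_le_lim => //; exact: cvgP cb.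
have aT K : a K <= T / (1 - y).
  have h1 : a K <= a K.+1 by rewrite /a seriesSr lerDl.
  have h2 : a K <= y * a K + T by apply: (le_trans h1); rewrite rec lerD2l; exact: bT.
  rewrite ler_pdivlMr ?subr_gt0 //; lra.
have [ca _] := @mono_series (fun k => B n.+1 k * y ^+ k) _ a0 aT.
set A := limn a in ca.
have c1 : (fun K => a K.+1) @ \oo --> A by rewrite (cvg_shiftS a).
have c2 : (fun K => y * a K + b K.+1) @ \oo --> y * A + T.
  apply: cvgD; first exact: cvgMl_tmp.
  by have := cb; rewrite -(cvg_shiftS b).
have eA : A = y * A + T.
  have c2' : (fun K => a K.+1) @ \oo --> y * A + T.
    have e : (fun K => y * a K + b K.+1) = (fun K => a K.+1) by apply/funext => K; rewrite rec.
    by rewrite -e.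
  have e1 : limn (fun K => a K.+1) = A by apply: cvg_lim.
  have e2 : limn (fun K => a K.+1) = y * A + T by apply: cvg_lim.
  by rewrite -[LHS]e1 e2.
have -> : (\prod_(j < n.+2) (1 - q ^+ j * y))^-1 = A.
  rewrite big_ord_recl expr0 mul1r invfM.
  have -> : \prod_(i < n.+1) (1 - q ^+ (bump 0 i) * y) = \prod_(j < n.+1) (1 - q ^+ j * (q * y)).
    by apply: eq_bigr => i _; rewrite /bump /= add1n exprSr mulrA.
  rewrite -/T.
  have hy : 1 - y != 0 by rewrite subr_eq0 gt_eqF.
  apply: (mulfI hy); rewrite mulrA mulfV // mul1r mulrBl mul1r; lra.
exact: ca.
Qed.

Section Moments.
Variable n : nat.
Hypothesis n0 : (0 < n)%N.
Variable y : R.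
Hypothesis y0 : 0 <= y.
Hypothesis y1 : y < 1.

Let c k := B n k * y ^+ k.
Let xi k := qint q k / qint q (k + n).
Let P := \prod_(j < n.+1) (1 - q ^+ j * y).
Let S := P^-1.
Let m := qint q n.

Lemma c_ge0 k : 0 <= c k.
Proof. by rewrite /c mulr_ge0 ?exprn_ge0 // ltW // B_gt0. Qed.

Lemma xi_ge0 k : 0 <= xi k.
Proof. by rewrite /xi divr_ge0 // qint_ge0. Qed.

Lemma xi_le1 k : xi k <= 1.
Proof.
rewrite /xi ler_pdivrMr ?mul1r ?qint_le ?leq_addr //.
by apply: qint_gt0; rewrite addn_gt0 n0 orbT.
Qed.

Lemma P_gt0 : 0 < P.
Proof.
rewrite /P prodr_gt0 // => j _; rewrite subr_gt0.
apply: le_lt_trans y1; rewrite ler_piMl //; exact: exprn_ile1 (ltW q0) q1.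
Qed.

Lemma PS : P * S = 1.
Proof. by rewrite /S mulfV // lt0r_neq0 // P_gt0. Qed.

Lemma S_ge0 : 0 <= S.
Proof. by rewrite /S invr_ge0 ltW // P_gt0. Qed.

Lemma m_gt0 : 0 < m.
Proof. exact: qint_gt0. Qed.

Lemma Sc : series c @ \oo --> S.
Proof. by apply: Sconv; rewrite y0. Qed.

Lemma series_c_le K : series c K <= S.
Proof.
have -> : S = limn (series c) by rewrite (cvg_lim _ Sc).
apply: series_le_lim; [exact: c_ge0 | exact: cvgP Sc].
Qed.

Lemma M1 : series (fun k => c k * xi k) @ \oo --> y * S.
Proof.
rewrite -cvg_shiftS.
have -> : (fun K => series (fun k => c k * xi k) K.+1) = (fun K => y * series c K).
  apply/funext => K; rewrite /series /= big_nat_recl // /xi qint0 mul0r mulr0 add0r.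
  rewrite mulr_sumr; apply: eq_bigr => k _.
  rewrite /c -(Bxi n k) exprS; ring.
apply: cvgMl_tmp; exact: Sc.
Qed.

Lemma M1_le K : series (fun k => c k * xi k) K <= y * S.
Proof.
have -> : y * S = limn (series (fun k => c k * xi k)) by rewrite (cvg_lim _ M1).
apply: series_le_lim; last exact: cvgP M1.
by move=> k; rewrite mulr_ge0 ?c_ge0 ?xi_ge0.
Qed.

Lemma M2 : cvgn (series (fun k => c k * xi k ^+ 2)) /\
  limn (series (fun k => c k * xi k ^+ 2)) <= y * (y * S + S / m).
Proof.
apply: mono_series; first by move=> k; rewrite mulr_ge0 ?c_ge0 ?exprn_ge0 ?xi_ge0.
case=> [|K].
  rewrite /series /= big_geq //; apply: mulr_ge0 => //; apply: addr_ge0.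
    by apply: mulr_ge0 => //; exact: S_ge0.
  by apply: divr_ge0; [exact: S_ge0 | exact: ltW m_gt0].
have e : series (fun k => c k * xi k ^+ 2) K.+1 = y * \sum_(0 <= k < K) c k * xi k.+1.
  rewrite /series /= big_nat_recl // /xi qint0 mul0r expr0n /= mulr0 add0r.
  rewrite mulr_sumr; apply: eq_bigr => k _.
  rewrite /c -(Bxi n k) exprS; ring.
rewrite e; apply: ler_wpM2l => //.
have h1 : \sum_(0 <= k < K) c k * xi k.+1 <=
    \sum_(0 <= k < K) (c k * xi k + c k / m).
  apply: ler_sum => k _; rewrite -mulrDr ler_wpM2l ?c_ge0 //.
  exact: xi_step.
apply: le_trans h1 _; rewrite big_split /= -mulr_suml.
apply: lerD; last by rewrite ler_wpM2r ?invr_ge0 ?(ltW m_gt0) // series_c_le.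
apply: le_trans (M1_le K.+1).
by rewrite [X in _ <= X]/series /= big_nat_recr //= lerDl mulr_ge0 ?c_ge0 ?xi_ge0.
Qed.

Lemma W_cvg : exists LW, series (fun k => c k * (xi k - y) ^+ 2) @ \oo --> LW /\ LW <= S / m.
Proof.
have [c2 l2] := M2.
set T2 := limn (series (fun k => c k * xi k ^+ 2)) in l2.
exists (T2 - 2 * y * (y * S) + y ^+ 2 * S); split.
  have -> : series (fun k => c k * (xi k - y) ^+ 2) =
     (fun K => series (fun k => c k * xi k ^+ 2) K - 2 * y * series (fun k => c k * xi k) K
        + y ^+ 2 * series c K).
    apply/funext => K; rewrite /series /= !mulr_sumr -sumrB -big_split /=.
    by apply: eq_bigr => k _; ring.
  apply: cvgD; last exact: cvgMl_tmp Sc.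
  apply: cvgB; [exact: c2 | exact: cvgMl_tmp M1].
have hS := S_ge0; have hm := m_gt0.
have hSm : 0 <= S / m by rewrite divr_ge0 // ltW.
have : y * (S / m) <= S / m by rewrite ler_piMl // ltW.
move: l2; rewrite mulrDr; nra.
Qed.


Lemma approx_norm (hk : nat -> R) h0 eps K H : 0 <= eps -> 0 <= K ->
  (forall k, 0 <= hk k <= H) ->
  (forall k, `|hk k - h0| <= eps + K * (xi k - y) ^+ 2) ->
  cvgn (series (fun k => c k * hk k)) /\
  0 <= P * limn (series (fun k => c k * hk k)) <= H /\
  `|P * limn (series (fun k => c k * hk k)) - h0| <= eps + K / m.
Proof.
move=> e0 K0 hH hb.
set u := fun k => c k * hk k.
have u0 k : 0 <= u k by rewrite mulr_ge0 ?c_ge0 //; case/andP: (hH k).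
have H0 : 0 <= H by case/andP: (hH 0%N) => /le_trans; apply.
have [cu lu] : cvgn (series u) /\ limn (series u) <= H * S.
  apply: mono_series => // K'.
  apply: le_trans (_ : H * series c K' <= _); last by rewrite ler_wpM2l // series_c_le.
  rewrite /series /= mulr_sumr; apply: ler_sum => k _.
  by rewrite /u mulrC ler_wpM2r ?c_ge0 //; case/andP: (hH k).
have lu0 : 0 <= limn (series u).
  apply: limr_ge => //; apply: nearW => K'; rewrite /series /=; apply: sumr_ge0 => k _; exact: u0.
have [LW [cW lW]] := W_cvg.
set W := fun k => c k * (xi k - y) ^+ 2.
have cU : series (fun k => (h0 + eps) * c k + K * W k) @ \oo --> (h0 + eps) * S + K * LW.
  have -> : series (fun k => (h0 + eps) * c k + K * W k) =
      (fun K' => (h0 + eps) * series c K' + K * series W K').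
    by apply/funext => K'; rewrite /series /= big_split /= !mulr_sumr.
  by apply: cvgD; apply: cvgMl_tmp; [exact: Sc | exact: cW].
have cD : series (fun k => (h0 - eps) * c k - K * W k) @ \oo --> (h0 - eps) * S - K * LW.
  have -> : series (fun k => (h0 - eps) * c k - K * W k) =
      (fun K' => (h0 - eps) * series c K' - K * series W K').
    by apply/funext => K'; rewrite /series /= sumrB !mulr_sumr.
  by apply: cvgB; apply: cvgMl_tmp; [exact: Sc | exact: cW].
have up : limn (series u) <= (h0 + eps) * S + K * LW.
  rewrite -(cvg_lim _ cU) //; apply: ler_lim => //; first exact: cvgP cU.
  apply: nearW => K'; rewrite /series /=; apply: ler_sum => k _.
  have := hb k; rewrite /u /W ler_norml => /andP[_ h2].
  have ck := c_ge0 k.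
  have : c k * (hk k - h0) <= c k * (eps + K * (xi k - y) ^+ 2) by rewrite ler_wpM2l.
  move=> h3; nra.
have lo : (h0 - eps) * S - K * LW <= limn (series u).
  rewrite -(cvg_lim _ cD) //; apply: ler_lim => //; first exact: cvgP cD.
  apply: nearW => K'; rewrite /series /=; apply: ler_sum => k _.
  have := hb k; rewrite /u /W ler_norml => /andP[h1 _].
  have ck := c_ge0 k.
  have : c k * (- (eps + K * (xi k - y) ^+ 2)) <= c k * (hk k - h0) by rewrite ler_wpM2l.
  move=> h3; nra.
have P0 := P_gt0; have hPS := PS; have hS := S_ge0; have hm := m_gt0.
split => //; split.
  apply/andP; split; first by rewrite mulr_ge0 // ltW.
  have := ler_wpM2l (ltW P0) lu; rewrite mulrCA hPS mulr1 //.
have hKLW : K * LW <= K * (S / m) by rewrite ler_wpM2l.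
set L := limn (series u) in lu lu0 up lo *.
have A1 : P * L <= (h0 + eps) * (P * S) + P * (K * LW).
  apply: le_trans (ler_wpM2l (ltW P0) up) _; rewrite le_eqVlt; apply/orP; left; apply/eqP; ring.
have A2 : (h0 - eps) * (P * S) - P * (K * LW) <= P * L.
  apply: le_trans (ler_wpM2l (ltW P0) lo); rewrite le_eqVlt; apply/orP; left; apply/eqP; ring.
have A3 : P * (K * LW) <= K / m.
  apply: le_trans (ler_wpM2l (ltW P0) hKLW) _.
  have -> : K / m = K / m * (P * S) by rewrite hPS mulr1.
  rewrite le_eqVlt; apply/orP; left; apply/eqP; ring.
rewrite hPS in A1 A2.
rewrite ler_norml; apply/andP; split; lra.
Qed.
End Moments.
End QArith.

Lemma MKZ_approx (R : realType) (x1 xN : R) n (q : R) (h : R -> R) t eps K H :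
  x1 < xN -> (0 < n)%N -> 0 < q -> q <= 1 -> Iset x1 xN t -> 0 <= eps -> 0 <= K ->
  (forall s, Iset x1 xN s -> 0 <= h s <= H) ->
  (forall s, Iset x1 xN s -> `|h s - h t| <= eps + K * (s - t) ^+ 2) ->
  0 <= MKZ x1 xN n q h t <= H /\
  `|MKZ x1 xN n q h t - h t| <= eps + K * (xN - x1) ^+ 2 / qint q n.
Proof.
move=> x1N n0 q0 q1 It e0 K0 hH hb.
have m0 := @m_gt0 _ _ q0 _ n0.
rewrite /MKZ; case: eqP => [->|/eqP tN].
  split; first by apply: hH; rewrite /Iset /= lexx ltW.
  rewrite subrr normr0; apply: addr_ge0 => //; apply: divr_ge0; last exact: ltW.
  by apply: mulr_ge0 => //; apply: exprn_ge0; rewrite subr_ge0 ltW.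
set L := xN - x1.
have L0 : 0 < L by rewrite subr_gt0.
have /andP[t1 t2] := It.
have tlt : t < xN by rewrite lt_neqAle tN.
set y := (t - x1) / L.
have y0 : 0 <= y by rewrite divr_ge0 ?subr_ge0 // ltW.
have y1 : y < 1 by rewrite ltr_pdivrMr // mul1r ltrD2r.
have ePq : Pq x1 xN n q t = \prod_(j < n.+1) (1 - q ^+ j * y).
  rewrite /Pq big_mkord.
  have e : \prod_(i < n.+1) (xN - x1 - q ^+ i * (t - x1)) = \prod_(i < n.+1) (L * (1 - q ^+ i * y)).
    by apply: eq_bigr => j _; rewrite /y /L; field; rewrite lt0r_neq0.
  rewrite e.
  rewrite big_split /= prodr_const card_ord -/L [L ^+ _ * _]mulrC mulrK //.
  by rewrite unitfE expf_neq0 // lt0r_neq0.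
rewrite ePq.
set hk := fun k => h (x1 + L * (qint q k / qint q (k + n))).
have hk_in k : Iset x1 xN (x1 + L * (qint q k / qint q (k + n))).
  have := @xi_ge0 _ _ q0 n k; have := @xi_le1 _ _ q0 _ n0 k => /= a1 a0.
  apply/andP; split; first by rewrite lerDl mulr_ge0 // ltW.
  rewrite -lerBrDl -/L ler_piMr //; exact: ltW.
have hkH k : 0 <= hk k <= H by apply: hH.
have hkb k : `|hk k - h t| <= eps + K * L ^+ 2 * (qint q k / qint q (k + n) - y) ^+ 2.
  apply: le_trans (hb _ (hk_in k)) _.
  set xk := qint q k / qint q (k + n).
  have -> : x1 + L * xk - t = L * (xk - y) by rewrite /y; field; exact: lt0r_neq0.
  by rewrite exprMn mulrA.
have [_ [h1 h2]] := @approx_norm _ _ q0 q1 _ n0 _ y0 y1 _ _ _ _ _ e0 (mulr_ge0 K0 (exprn_ge0 2 (ltW L0))) hkH hkb.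
by split.
Qed.

Lemma IsetE (R : realType) (x1 xN : R) : Iset x1 xN = `[x1, xN]%classic.
Proof. by apply/seteqP; split => t /=; rewrite in_itv /=. Qed.

Lemma Iset_compact (R : realType) (x1 xN : R) : compact (Iset x1 xN).
Proof. rewrite IsetE; exact: segment_compact. Qed.

Lemma cont_bounded (R : realType) (x1 xN : R) (h : R -> R) :
  {within Iset x1 xN, continuous h} ->
  exists M, forall t, Iset x1 xN t -> `|h t| <= M.
Proof.
move=> hc; have := compact_bounded (continuous_compact hc (@Iset_compact _ x1 xN)).
move=> [M0 [M0r HM]]; exists (`|M0| + 1) => t It.
have := HM (`|M0| + 1); apply; last by exists t.
by apply: (le_lt_trans (real_ler_norm M0r)); rewrite ltrDl.
Qed.

Lemma unif_cont (R : realType) (x1 xN : R) (h : R -> R) (eps : R) :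
  {within Iset x1 xN, continuous h} -> 0 < eps ->
  exists2 d, 0 < d & forall s t, Iset x1 xN s -> Iset x1 xN t ->
    `|s - t| < d -> `|h s - h t| < eps.
Proof.
move=> hc e0.
have cv := (near_covering_withinP _).2 ((compact_near_coveringP _).1 (@Iset_compact _ x1 xN)).
have := cv R (0:R)^'+ (fun d s => forall s', Iset x1 xN s' -> `|s - s'| < d -> `|h s - h s'| < eps) _.
move=> /(_ _) H.
have {}H : \forall d \near (0:R)^'+, Iset x1 xN `<=` (fun s => forall s', Iset x1 xN s' -> `|s - s'| < d -> `|h s - h s'| < eps).
  apply: H => x Ix.
  have /subspace_continuousP hc' := hc.
  have := hc' x Ix; move/cvgrPdist_lt => /(_ (eps / 2)) /(_ (divr_gt0 e0 (ltr0Sn _ 1))).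
  move=> /nbhs_ballP [r r0 Hr].
  exists (ball x (r / 2), ball (0:R) (r / 2)) => /=.
    have r2 : 0 < r / 2 by exact: divr_gt0 r0 (ltr0Sn _ 1).
    split; first exact: nbhsx_ballx.
    by apply: filterS (nbhsx_ballx (0:R) (r/2) r2) => d Bd _.
  move=> [x' d] [/= Bx' Bd] Ix' s' Is' ds.
  move: Bx' Bd; rewrite /ball /= => Bx' Bd.
  have r2' : r / 2 <= r by rewrite ler_pdivrMr //; move: r0 => /= r0; lra.
  have Bx'' : ball x r x' by rewrite /ball /=; exact: (lt_le_trans Bx').
  have H1 := Hr x' Bx'' Ix'.
  have Bs : ball x r s'.
    rewrite /ball /=; apply: (le_lt_trans (ler_distD x' x s')).
    have hd : d < r / 2 by apply: le_lt_trans (ler_norm d) _; rewrite -normrN -sub0r.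
    rewrite [X in _ < X](splitr r); apply: ltrD => //; exact: lt_trans ds hd.
  have H2 := Hr s' Bs Is'.
  rewrite /from_subspace in H1 H2.
  apply: (le_lt_trans (ler_distD (h x) (h x') (h s'))).
  rewrite [X in _ < X](splitr eps) (distrC (h x')); exact: ltrD.
have [d [d0 Hd]] := filter_ex (filterI (nbhs_right_gt (0:R)) H).
by exists d => // s t Is It; apply: Hd.
Qed.

Section SupLemmas.
Variable R : realType.

Lemma img_sup_ub (A : set R) (F : R -> R) M t :
  (forall s, A s -> F s <= M) -> A t -> F t <= sup [set F s | s in A].
Proof.
move=> hM At; apply: sup_upper_bound; last by exists t.
split; first by exists (F t), t.
by exists M => _ [s As <-]; exact: hM.
Qed.

Lemma img_sup_le (A : set R) (F : R -> R) B :
  A !=set0 -> (forall s, A s -> F s <= B) -> sup [set F s | s in A] <= B.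
Proof.
move=> [t At] hB; apply: ge_sup; first by exists (F t), t.
by move=> _ [s As <-]; exact: hB.
Qed.

Lemma img_inf_lb (A : set R) (F : R -> R) M t :
  (forall s, A s -> M <= F s) -> A t -> inf [set F s | s in A] <= F t.
Proof.
move=> hM At; apply: ge_inf; last by exists t.
by exists M => _ [s As <-]; exact: hM.
Qed.

Lemma img_inf_ge (A : set R) (F : R -> R) B :
  A !=set0 -> (forall s, A s -> B <= F s) -> B <= inf [set F s | s in A].
Proof.
move=> [t At] hB; apply: lb_le_inf; first by exists (F t), t.
by move=> _ [s As <-]; exact: hB.
Qed.

Definition exc (C v : R) := Num.max 0 (Num.max (- v) (v - C)).

Lemma exc_ge0 C v : 0 <= exc C v.
Proof. by rewrite /exc le_max lexx. Qed.

Lemma exc_le C v G0 : 0 <= G0 <= C -> exc C v <= `|v - G0|.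
Proof.
move=> /andP[g0 gC]; have n1 := ler_norm (v - G0); have n2 := ler_norm (G0 - v).
rewrite distrC in n2; rewrite /exc !ge_max normr_ge0 /=; apply/andP; split; lra.
Qed.

Lemma exc_clamp C v : 0 <= C -> exists2 c, 0 <= c <= C & `|v - c| <= exc C v.
Proof.
move=> C0; rewrite /exc.
have [v0|v0] := ltP v 0.
  exists 0; first by rewrite lexx C0.
  by rewrite subr0 ltr0_norm // le_max; apply/orP; right; rewrite le_max lexx.
have [vC|vC] := ltP C v.
  exists C; first by rewrite lexx C0.
  rewrite gtr0_norm ?subr_gt0 // le_max; apply/orP; right; rewrite le_max lexx orbT //.
exists v; first by rewrite v0 vC.
by rewrite subrr normr0 exc_ge0.
Qed.

Lemma excess_zero (I : set R) (g : R -> R) (C a : R) :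
  I !=set0 -> (exists M, forall t, I t -> `|g t| <= M) -> 0 <= a < 1 -> 0 <= C ->
  (forall y, I y -> exists2 t, I t & exists al A0, `|al| <= a /\ g y = A0 + al * g t /\
      (forall c, 0 <= c <= C -> 0 <= A0 + al * c <= C)) ->
  forall t, I t -> 0 <= g t <= C.
Proof.
move=> In0 [M hM] /andP[a0 a1] C0 hrec.
have exb t : I t -> exc C (g t) <= M + C.
  move=> It; rewrite /exc !ge_max; have := hM t It; rewrite ler_norml => /andP[h1 h2].
  by apply/andP; split; last (apply/andP; split); lra.
set d := sup [set exc C (g s) | s in I].
have exd t : I t -> exc C (g t) <= d by move=> It; exact: img_sup_ub exb It.
have d0 : 0 <= d by case: In0 => t It; apply: le_trans (exd t It); exact: exc_ge0.
have dad : d <= a * d.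
  apply: img_sup_le => // y Iy.
  have [t It [al [A0 [ala [gy hA]]]]] := hrec y Iy.
  have [c cC hc] := @exc_clamp C (g t) C0.
  have := hA c cC => hG.
  apply: le_trans (@exc_le C (g y) _ hG) _.
  have -> : g y - (A0 + al * c) = al * (g t - c) by rewrite gy; ring.
  rewrite normrM; apply: ler_pM; [exact: normr_ge0 | exact: normr_ge0 | exact: ala |].
  exact: le_trans hc (exd t It).
have d_0 : d = 0.
  apply/eqP; rewrite eq_le d0 andbT.
  have : (1 - a) * d <= 0 by rewrite mulrBl mul1r subr_le0.
  by rewrite pmulr_rle0 // subr_gt0.
move=> t It; have := exd t It; rewrite d_0 /exc !ge_max lexx /= => /andP[h1 h2].
by apply/andP; split; lra.
Qed.

Lemma contract_bound (I : set R) (g fk : R -> R) (a E0 : R) :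
  I !=set0 -> (exists M, forall t, I t -> `|g t - fk t| <= M) -> 0 <= a < 1 -> 0 <= E0 ->
  (forall y, I y -> exists2 t, I t & `|g y - fk y| <= a * (`|g t - fk t| + E0)) ->
  forall t, I t -> `|g t - fk t| <= E0 / (1 - a).
Proof.
move=> In0 [M hM] /andP[a0 a1] E00 hrec.
set D := sup [set `|g s - fk s| | s in I].
have hD t : I t -> `|g t - fk t| <= D by move=> It; exact: img_sup_ub hM It.
have DaD : D <= a * (D + E0).
  apply: img_sup_le => // y Iy.
  have [t It h] := hrec y Iy; apply: le_trans h _.
  by apply: ler_wpM2l => //; rewrite lerD2r hD.
move=> t It; apply: le_trans (hD t It) _.
rewrite ler_pdivlMr ?subr_gt0 //.
have : a * E0 <= E0 by rewrite ler_piMl // ltW.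
nra.
Qed.

End SupLemmas.

Lemma key_ineq (R : realType) (F phi Phi m phin Phin C al c : R) :
  phi <= F -> F <= Phi -> 0 <= phi -> Phi <= C -> 0 <= m -> phin <= m -> m <= Phin ->
  phin < C -> 0 <= c <= C ->
  Num.max (- phi / (C - phin)) (- ((C - Phi) / Phin)) <= al ->
  al <= Num.min (phi / Phin) ((C - Phi) / (C - phin)) ->
  0 <= F + al * (c - m) <= C.
Proof.
move=> h1 h2 h3 h4 h5 h6 h7 h8 /andP[c0 cC].
rewrite ge_max le_min => /andP[l1 l2] /andP[u1 u2].
have Cp : 0 < C - phin by rewrite subr_gt0.
move: l1; rewrite ler_pdivrMr // mulrBr => l1.
move: u2; rewrite ler_pdivlMr // mulrBr => u2.
rewrite mulrBr.
have [Pp|P0] := ltP 0 Phin.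
  move: u1; rewrite ler_pdivlMr // => u1.
  move: l2; rewrite -[- ((C - Phi) / Phin)]mulNr ler_pdivrMr // => l2.
  have [a0|a0] := leP 0 al.
    have p1 : 0 <= al * c by rewrite mulr_ge0.
    have p2 : al * c <= al * C by rewrite ler_wpM2l.
    have p3 : al * m <= al * Phin by rewrite ler_wpM2l.
    have p4 : al * phin <= al * m by rewrite ler_wpM2l.
    apply/andP; split; lra.
  have p1 : al * c <= 0 by rewrite mulr_le0_ge0 // ltW.
  have p2 : al * C <= al * c by rewrite ler_wnM2l // ltW.
  have p3 : al * Phin <= al * m by rewrite ler_wnM2l // ltW.
  have p4 : al * m <= al * phin by rewrite ler_wnM2l // ltW.
  apply/andP; split; lra.
have m0 : m = 0 by apply/eqP; rewrite eq_le h5 andbT (le_trans h7 P0).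
rewrite m0 mulr0 subr0.
have [a0|a0] := leP 0 al.
  have p1 : 0 <= al * c by rewrite mulr_ge0.
  have p2 : al * c <= al * C by rewrite ler_wpM2l.
  have p4 : al * phin <= 0 by apply: mulr_ge0_le0 => //; rewrite -m0.
  apply/andP; split; lra.
have p1 : al * c <= 0 by rewrite mulr_le0_ge0 // ltW.
have p2 : al * C <= al * c by rewrite ler_wnM2l // ltW.
have p4 : 0 <= al * phin by apply: mulr_le0; [exact: ltW | rewrite -m0].
apply/andP; split; lra.
Qed.

Lemma bernoulli_le (R : realType) (q : R) i : 0 <= q -> 1 - i%:R * (1 - q) <= q ^+ i.
Proof.
move=> q0; elim: i => [|i IH]; first by rewrite mul0r subr0 expr0.
rewrite exprS -natr1.
have h1 : q * (1 - i%:R * (1 - q)) <= q * q ^+ i by rewrite ler_wpM2l.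
have h2 : 0 <= i%:R * ((1 - q) * (1 - q)) by apply: mulr_ge0 => //; rewrite -expr2 sqr_ge0.
apply: le_trans h1; nra.
Qed.

Lemma qint_big (R : realType) (q : nat -> R) (M : R) :
  (forall n, (1 <= n)%N -> 0 < q n <= 1) -> q n @[n --> \oo] --> (1:R) ->
  exists n2, forall n, (n2 <= n)%N -> M <= qint (q n) n.
Proof.
move=> q01 qc.
set m := (Num.trunc (2 * `|M|)).+1.
have mM : 2 * `|M| < m%:R by exact: truncnS_gt.
have m0 : (0 < m%:R :> R) by rewrite ltr0n.
have r0 : 0 < (2 * m%:R)^-1 :> R by rewrite invr_gt0 mulr_gt0.
move: qc => /cvgrPdist_lt /(_ _ r0) [n1 _ Hn1].
exists (maxn (maxn n1 m) 1) => n; rewrite !geq_max => /andP[/andP[hn1 hnm] hn0].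
have /andP[qn0 qn1] := q01 n hn0.
have hq : 1 - q n < (2 * m%:R)^-1 by have := Hn1 n hn1; rewrite ger0_norm // subr_ge0.
apply: le_trans (@qint_le _ _ qn0 _ _ hnm); rewrite qintE.
have h1 : \sum_(i < m) (2^-1 : R) <= \sum_(i < m) q n ^+ i.
  apply: ler_sum => i _; apply: le_trans (@bernoulli_le _ _ i (ltW qn0)).
  have hi : i%:R <= m%:R :> R by rewrite ler_nat ltnW.
  have : i%:R * (1 - q n) <= m%:R * (1 - q n) by rewrite ler_wpM2r // subr_ge0.
  have : m%:R * (1 - q n) <= m%:R * (2 * m%:R)^-1 by rewrite ler_wpM2l // ltW.
  have -> : m%:R * (2 * m%:R)^-1 = 2^-1 :> R by field; rewrite lt0r_neq0.
  lra.
apply: le_trans h1; rewrite sumr_const card_ord.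
have hM := ler_norm M.
rewrite -mulr_natr; lra.
Qed.
Arguments cont_bounded {R x1 xN h}.
Arguments unif_cont {R x1 xN h eps}.
Arguments img_sup_ub {R A F M t}.
Arguments img_sup_le {R A F B}.
Arguments img_inf_lb {R A F M t}.
Arguments img_inf_ge {R A F B}.
Arguments excess_zero {R I g C a}.
Arguments contract_bound {R I g fk a E0}.
Arguments key_ineq {R F phi Phi m phin Phin C al c}.
Arguments qint_big {R q}.
Theorem theorem4p2 (R : realType) (N : nat) (x : nat -> R) (a b : nat -> R)
  (alpha : nat -> R -> R) (fs : nat -> R -> R) (f : R -> R) (q : nat -> R)
  (C : nat -> nat -> R) (g : nat -> nat -> R -> R) :
  (2 <= N)%N ->
  (forall i, (1 <= i)%N -> (i < N)%N -> x i < x i.+1) ->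
  (forall i, (1 <= i)%N -> (i < N)%N ->
     a i * x 1%N + b i = x i /\ a i * x N + b i = x i.+1) ->
  (* f_k positive, continuous, converging uniformly to f continuous *)
  (forall k, (1 <= k)%N -> forall t, Iset (x 1%N) (x N) t -> 0 <= fs k t) ->
  (forall k, (1 <= k)%N -> {within Iset (x 1%N) (x N), continuous (fs k)}) ->
  {within Iset (x 1%N) (x N), continuous f} ->
  supnorm (x 1%N) (x N) (fs k \- f) @[k --> \oo] --> (0 : R) ->
  (* q_n in (0,1], q_n -> 1 *)
  (forall n, (1 <= n)%N -> 0 < q n <= 1) ->
  q n @[n --> \oo] --> (1 : R) ->
  (* C^dagger_{n,k} *)
  (forall n k, (1 <= n)%N -> (1 <= k)%N ->
     0 < C n k /\
     Num.max (minI (x 1%N) (x N) (MKZ (x 1%N) (x N) n (q n) (fs k)))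
             (supnorm (x 1%N) (x N) (fs k)) < C n k) ->
  (* scaling functions *)
  (forall i, (1 <= i)%N -> (i < N)%N ->
     {within Iset (x 1%N) (x N), continuous (alpha i)}) ->
  (forall i, (1 <= i)%N -> (i < N)%N -> supnorm (x 1%N) (x N) (alpha i) < 1) ->
  (forall k n i t, (1 <= k)%N -> (1 <= n)%N -> (1 <= i)%N -> (i < N)%N ->
     Iset (x 1%N) (x N) t ->
     let phi := minI (x 1%N) (x N) (fun s => fs k (a i * s + b i)) in
     let Phi := maxI (x 1%N) (x N) (fun s => fs k (a i * s + b i)) in
     let phin := minI (x 1%N) (x N) (MKZ (x 1%N) (x N) n (q n) (fs k)) in
     let Phin := maxI (x 1%N) (x N) (MKZ (x 1%N) (x N) n (q n) (fs k)) in
     Num.max (- phi / (C n k - phin)) (- ((C n k - Phi) / Phin)) <= alpha i t /\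
     alpha i t <= Num.min (phi / Phin) ((C n k - Phi) / (C n k - phin))) ->
  (* g k n is the quantum MKZ-fractal function of f_k with parameter q_n *)
  (forall k n, (1 <= k)%N -> (1 <= n)%N ->
     {within Iset (x 1%N) (x N), continuous (g k n)} /\
     forall i t, (1 <= i)%N -> (i < N)%N -> Iset (x 1%N) (x N) t ->
       g k n (a i * t + b i) =
       fs k (a i * t + b i) +
       alpha i t * (g k n t - MKZ (x 1%N) (x N) n (q n) (fs k) t)) ->
  (forall k n, (1 <= k)%N -> (1 <= n)%N ->
     forall t, Iset (x 1%N) (x N) t -> 0 <= g k n t) /\
  (forall eps, 0 < eps -> exists k0 : nat, forall k n,
     (1 <= k)%N -> (1 <= n)%N -> (k0 <= k)%N -> (k0 <= n)%N ->
     supnorm (x 1%N) (x N) (g k n \- f) < eps).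
Proof.
move=> N2 xinc uab fs0 fsc fc fcv q01 qcv Cb alc aln alb gdef.
have xmono : forall i j, (1 <= i)%N -> (i <= j)%N -> (j <= N)%N -> x i <= x j.
  move=> i j i1; elim: j => [|j IH] ij jN; first by move: (leq_trans i1 ij).
  rewrite leq_eqVlt in ij; case/orP: ij => [/eqP -> //| ij].
  apply: le_trans (IH ij (ltnW jN)) (ltW (xinc j (leq_trans i1 ij) jN)).
have x1N : x 1%N < x N.
  exact: lt_le_trans (xinc 1%N isT N2) (xmono 2%N N isT N2 (leqnn N)).
set I := Iset (x 1%N) (x N).
have x1I : I (x 1%N) by rewrite /I /Iset /= lexx ltW.
have In0 : I !=set0 by exists (x 1%N).
have apos i : (1 <= i)%N -> (i < N)%N -> 0 < a i.
  move=> i1 iN; have [e1 e2] := uab i i1 iN; have := xinc i i1 iN.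
  have h : x i.+1 - x i = a i * (x N - x 1%N) by rewrite -e1 -e2; ring.
  move=> hx; have : 0 < a i * (x N - x 1%N) by rewrite -h subr_gt0.
  by rewrite pmulr_lgt0 // subr_gt0.
have uin i t : (1 <= i)%N -> (i < N)%N -> I t -> I (a i * t + b i).
  move=> i1 iN /andP[t1 t2]; have [e1 e2] := uab i i1 iN; have ai := apos i i1 iN.
  have h1 : a i * x 1%N <= a i * t by rewrite ler_wpM2l // ltW.
  have h2 : a i * t <= a i * x N by rewrite ler_wpM2l // ltW.
  have m1 := xmono 1%N i isT i1 (ltnW iN).
  have m2 := xmono i.+1 N isT iN (leqnn N).
  apply/andP; split; lra.
have cover y : I y -> exists i, [/\ (1 <= i)%N, (i < N)%N & exists2 t, I t & y = a i * t + b i].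
  move=> /andP[y1 yN].
  have H : forall j, (1 <= j)%N -> (j < N)%N -> y <= x j.+1 ->
      exists i, [/\ (1 <= i)%N, (i <= j)%N, x i <= y & y <= x i.+1].
    elim=> [//|j IH] _ jN yj.
    case: j IH jN yj => [|j] IH jN yj; first by exists 1%N; split.
    case: (leP y (x j.+2)) => [yle|ylt].
      have [i [i1 ij h1 h2]] := IH isT (ltnW jN) yle.
      by exists i; split => //; exact: leqW.
    by exists j.+2; split => //; exact: ltW.
  have N1 : N.-1.+1 = N := prednK (ltnW N2).
  have c1 : (1 <= N.-1)%N by rewrite -ltnS N1.
  have c2 : (N.-1 < N)%N by rewrite -{2}N1.
  have c3 : y <= x N.-1.+1 by rewrite N1.
  have [i [i1 ij xi yi]] := H N.-1 c1 c2 c3.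
  have iN : (i < N)%N by rewrite -N1 ltnS.
  have [e1 e2] := uab i i1 iN; have ai := apos i i1 iN.
  exists i; split => //; exists ((y - b i) / a i); last by field; exact: lt0r_neq0.
  apply/andP; split.
    by rewrite ler_pdivlMr // mulrC; lra.
  by rewrite ler_pdivrMr // mulrC; lra.
have [aa [aa0 aa1 haa]] : exists aa, [/\ 0 <= aa, aa < 1 &
    forall i t, (1 <= i)%N -> (i < N)%N -> I t -> `|alpha i t| <= aa].
  have H j : exists aa, [/\ 0 <= aa, aa < 1 & forall i, (1 <= i)%N -> (i < j)%N ->
      (i < N)%N -> supnorm (x 1%N) (x N) (alpha i) <= aa].
    elim: j => [|j [aa [h0 h1 h2]]]; first by exists 0; split.
    case: (boolP ((1 <= j) && (j < N))%N) => [/andP[j1 jN]|hj].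
      exists (Num.max aa (supnorm (x 1%N) (x N) (alpha j))); split.
      - by rewrite le_max h0.
      - by rewrite gt_max h1 aln.
      move=> i i1 ij iN; rewrite le_max; rewrite ltnS leq_eqVlt in ij.
      case/orP: ij => [/eqP ->|ij]; first by rewrite lexx orbT.
      by rewrite h2.
    exists aa; split => // i i1 ij iN; apply: h2 => //.
    rewrite ltnS leq_eqVlt in ij; case/orP: ij => [/eqP eij|//].
    by move: hj; rewrite -eij i1 iN.
  have [aa [h0 h1 h2]] := H N; exists aa; split => // i t i1 iN It.
  apply: le_trans (h2 i i1 iN iN).
  have [Ma hMa] := cont_bounded (alc i i1 iN).
  exact: (img_sup_ub (F := fun t => `|alpha i t|) hMa It).
have pos : forall k n, (1 <= k)%N -> (1 <= n)%N -> forall t, I t -> 0 <= g k n t <= C n k.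
  move=> k n k1 n1.
  have [gcont geq] := gdef k n k1 n1.
  have [Mk hMk] := cont_bounded (fsc k k1).
  have [Cpos] := Cb n k n1 k1; rewrite gt_max => /andP[Cphin Csup].
  have /andP[qn0 qn1] := q01 n n1.
  have Mk0 : 0 <= Mk by apply: le_trans (hMk _ x1I); exact: normr_ge0.
  have fkH s : I s -> 0 <= fs k s <= Mk.
    by move=> Is; rewrite fs0 //=; apply: le_trans (ler_norm _) (hMk _ Is).
  have MB t : I t -> 0 <= MKZ (x 1%N) (x N) n (q n) (fs k) t <= Mk.
    move=> It.
    have hb : forall s, I s -> `|fs k s - fs k t| <= Mk + 0 * (s - t) ^+ 2.
      move=> s Is; rewrite mul0r addr0 ler_norml.
      by have := fkH s Is; have := fkH t It => /andP[? ?] /andP[? ?]; apply/andP; split; lra.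
    have [h _] := @MKZ_approx _ _ _ n (q n) (fs k) t Mk 0 Mk x1N n1 qn0 qn1 It Mk0 (lexx 0) fkH hb.
    exact: h.
  apply: (excess_zero (a := aa)) => //.
  - exact: cont_bounded gcont.
  - by rewrite aa0 aa1.
  - exact: ltW.
  move=> y Iy; have [i [i1 iN [t It ->]]] := cover y Iy.
  exists t => //.
  set m := MKZ (x 1%N) (x N) n (q n) (fs k) t.
  exists (alpha i t), (fs k (a i * t + b i) - alpha i t * m); split; first exact: haa.
  split; first by rewrite geq // -/m; ring.
  move=> c cc.
  have [l u] := alb k n i t k1 n1 i1 iN It.
  have e : fs k (a i * t + b i) - alpha i t * m + alpha i t * c =
      fs k (a i * t + b i) + alpha i t * (c - m) by ring.
  rewrite e; apply: key_ineq cc l u.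
  - apply: (img_inf_lb (F := fun s => fs k (a i * s + b i)) (M := 0)) It.
    by move=> s Is; apply: fs0 => //; exact: uin.
  - apply: (img_sup_ub (F := fun s => fs k (a i * s + b i)) (M := Mk)) It.
    by move=> s Is; apply: le_trans (ler_norm _) (hMk _ (uin _ _ i1 iN Is)).
  - rewrite /minI; apply: img_inf_ge; first exact: In0.
    by move=> s Is; apply: fs0 => //; exact: uin.
  - apply: le_trans (ltW Csup).
    rewrite /maxI; apply: img_sup_le; first exact: In0.
    move=> s Is.
    apply: le_trans (ler_norm _) _.
    exact: (img_sup_ub (F := fun t => `|fs k t|) hMk (uin _ _ i1 iN Is)).
  - by have /andP[] := MB t It.
  - apply: (img_inf_lb (F := MKZ (x 1%N) (x N) n (q n) (fs k)) (M := 0)) It.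
    by move=> s Is; have /andP[] := MB s Is.
  - apply: (img_sup_ub (F := MKZ (x 1%N) (x N) n (q n) (fs k)) (M := Mk)) It.
    by move=> s Is; have /andP[] := MB s Is.
  - exact: Cphin.
split; first by move=> k n k1 n1 t It; have /andP[] := pos k n k1 n1 t It.
move=> eps e0.
have [Bf hBf] := cont_bounded fc.
have Bf0 : 0 <= Bf by apply: le_trans (hBf _ x1I); exact: normr_ge0.
have aa1' : 0 < 1 - aa by rewrite subr_gt0.
set e8 := (1 - aa) * eps / 8.
have e80 : 0 < e8 by rewrite /e8 divr_gt0 ?mulr_gt0.
have e8le : e8 <= eps / 8.
  rewrite /e8 ler_pM2r ?invr_gt0 // mulrBl mul1r.
  by have := mulr_ge0 aa0 (ltW e0); lra.
have [d d0 hd] := unif_cont fc e80.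
set K := 2 * Bf / d ^+ 2.
have K0 : 0 <= K by rewrite /K divr_ge0 ?mulr_ge0 ?exprn_ge0 // ltW.
have fK s t : I s -> I t -> `|f s - f t| <= e8 + K * (s - t) ^+ 2.
  move=> Is It; have Ks : 0 <= K * (s - t) ^+ 2 by rewrite mulr_ge0 ?sqr_ge0.
  case: (ltP `|s - t| d) => [lt|ge].
    by have := hd s t Is It lt; lra.
  have h1 : d ^+ 2 <= (s - t) ^+ 2.
    rewrite -[(s - t) ^+ 2]ger0_norm ?sqr_ge0 // normrX.
    by apply: lerXn2r => //; rewrite ?nnegrE ?ltW.
  have h2 : K * d ^+ 2 <= K * (s - t) ^+ 2 by rewrite ler_wpM2l.
  have h3 : K * d ^+ 2 = 2 * Bf by rewrite /K; field; rewrite lt0r_neq0.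
  have h4 := ler_normB (f s) (f t).
  have := hBf s Is; have := hBf t It; lra.
have [k1 hk1] : exists k1, forall k, (k1 <= k)%N ->
    `|supnorm (x 1%N) (x N) (fs k \- f)| < e8.
  move: fcv => /cvgrPdist_lt /(_ e8 e80) [k1 _ hk1]; exists k1 => k hk.
  by have := hk1 k hk; rewrite sub0r normrN.
have fkf k t : (1 <= k)%N -> (k1 <= k)%N -> I t -> `|fs k t - f t| <= e8.
  move=> k1' hk It; have [Mk hMk] := cont_bounded (fsc k k1').
  apply: ltW; apply: le_lt_trans (hk1 k hk); apply: le_trans (ler_norm _).
  apply: (img_sup_ub (F := fun t => `|(fs k \- f) t|) (M := Mk + Bf)) It.
  move=> s Is /=; apply: le_trans (ler_normB _ _) _; apply: lerD; [exact: hMk | exact: hBf].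
set L2 := (x N - x 1%N) ^+ 2.
have L20 : 0 <= L2 by rewrite sqr_ge0.
have [n2 hn2] := qint_big (K * L2 / e8) q01 qcv.
exists (maxn (maxn k1 n2) 1) => k n k1' n1'.
rewrite !geq_max => /andP[/andP[hk _] _] /andP[/andP[_ hn] _].
have [gcont geq] := gdef k n k1' n1'.
have [Mk hMk] := cont_bounded (fsc k k1').
have [Mg hMg] := cont_bounded gcont.
have /andP[qn0 qn1] := q01 n n1'.
have Mk0 : 0 <= Mk by apply: le_trans (hMk _ x1I); exact: normr_ge0.
have fkH s : I s -> 0 <= fs k s <= Mk.
  by move=> Is; rewrite fs0 //=; apply: le_trans (ler_norm _) (hMk _ Is).
have qnn : 0 < qint (q n) n by apply: (@m_gt0 _ _ qn0 _ n1').
have KL : K * (x N - x 1%N) ^+ 2 / qint (q n) n <= e8.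
  rewrite ler_pdivrMr // -ler_pdivrMl // mulrC; exact: hn2.
have Mb t : I t -> `|MKZ (x 1%N) (x N) n (q n) (fs k) t - fs k t| <= 4 * e8.
  move=> It.
  have hb : forall s, I s -> `|fs k s - fs k t| <= 3 * e8 + K * (s - t) ^+ 2.
    move=> s Is.
    have := fkf k s k1' hk Is; have := fkf k t k1' hk It; have := fK s t Is It.
    have := ler_distD (f s) (fs k s) (fs k t); have := ler_distD (f t) (f s) (fs k t).
    rewrite (distrC (fs k t)); lra.
  have e3 : 0 <= 3 * e8 by rewrite mulr_ge0 // ltW.
  have [_ h] := @MKZ_approx _ _ _ n (q n) (fs k) t (3 * e8) K Mk x1N n1' qn0 qn1 It e3 K0 fkH hb.
  lra.
have gb : forall t, I t -> `|g k n t - fs k t| <= (4 * e8) / (1 - aa).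
  apply: (contract_bound (a := aa)) => //.
  - by exists (Mg + Mk) => t It; apply: le_trans (ler_normB _ _) _; apply: lerD; [exact: hMg | exact: hMk].
  - by rewrite aa0 aa1.
  - by rewrite mulr_ge0 // ltW.
  move=> y Iy; have [i [i1 iN [t It ->]]] := cover y Iy.
  exists t => //; rewrite geq // addrC addKr normrM.
  apply: ler_pM; [exact: normr_ge0 | exact: normr_ge0 | exact: haa |].
  have := Mb t It; have := ler_distD (fs k t) (g k n t) (MKZ (x 1%N) (x N) n (q n) (fs k) t).
  rewrite (distrC (fs k t)); lra.
have e4 : 4 * e8 / (1 - aa) = eps / 2 by rewrite /e8; field; rewrite lt0r_neq0.
rewrite /supnorm; apply: le_lt_trans (_ : eps / 2 + eps / 8 < eps); last by lra.
apply: img_sup_le; first exact: In0.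
move=> t It /=; apply: le_trans (ler_distD (fs k t) _ _) _.
have := gb t It; have := fkf k t k1' hk It; rewrite e4; lra.
Qed.
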